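(* Assume $G$ is connected. Let $S_n\subset V$ be nonempty with $S_n\ne V$, let $\delta t>0$ and $m>0$, and let $\mathcal V_m=\{u\in\mathcal V:-m\le u_i\le m\ \forall i\}$. Let $$F(u)=\mathrm{TV}^q_a(u)+\frac1{\delta t}\langle u,sd^{\Sigma_n}\rangle_{\mathcal V}.$$ Then $F$ has a minimizer over $\mathcal V_m$. Moreover, for every minimizer $u$ of $F$ over $\mathcal V_m$ and every $s\in(-m,m)$, the superlevel set $E(s)=\{i\in V:u_i>s\}$ minimizes $\hat S\mapsto\mathcal F(\hat S,S_n)$ over all subsets $\hat S\subset V$, where $$\mathcal F(\hat S,S_n)=\mathrm{TV}^q_a(\chi_{\hat S})-\mathrm{TV}^q_a(\chi_{S_n})+\frac1{\delta t}\big\langle\chi_{\hat S}-\chi_{S_n},(\chi_{\hat S}-\chi_{S_n})\,d^{\Sigma_n}\big\rangle_{\mathcal V}.$$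
   Context: $G=(V,E)$ is a finite undirected weighted graph with vertex set $V=\{1,\dots,n\}$. The weights satisfy $\omega_{ij}=\omega_{ji}\ge0$, with $\omega_{ij}>0$ iff $\{i,j\}\in E$, and $\omega_{ii}=0$. The degrees are $d_i=\sum_j\omega_{ij}>0$. Parameters $r\in[0,1]$ and $q\in[1/2,1]$ are fixed, and $\omega_{ij}^q:=0$ when $\omega_{ij}=0$. $\mathcal V$ is the space of functions $V\to\mathbb R$ with $\langle u,v\rangle_{\mathcal V}=\sum_iu_iv_id_i^r$, and $\chi_S$ is the indicator of $S$. The anisotropic total variation is $\mathrm{TV}^q_a(u)=\frac12\sum_{i,j}\omega_{ij}^q|u_i-u_j|$. Graph distance: each edge $\{i,j\}$ with $\omega_{ij}>0$ has length $\omega_{ij}^{q-1}$. The distance $d^G_{ij}$ is the minimal total length of a path from $i$ to $j$, with $d^G_{ii}=0$. For nonempty $T\subset V$, $d^T_i=\min_{j\in T}d^G_{ij}$. $\Sigma_n$ is the set of nodes incident to some edge $\{i,j\}$ with $\omega_{ij}>0$, $i\in S_n$, $j\notin S_n$. The signed distance is $sd^{\Sigma_n}=(\chi_{V\setminus S_n}-\chi_{S_n})\,d^{\Sigma_n}$ (pointwise product). *)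

(* Defs.v *)
From Stdlib Require Import Reals List Classical ClassicalEpsilon.
Open Scope R_scope.

(* Vertices are 0..n-1 (the paper's 1..n shifted by one).
   Weights: w : nat -> nat -> R, only values on 0..n-1 matter. *)

Definition sumV (n : nat) (f : nat -> R) : R :=
  fold_right Rplus 0 (map f (seq 0 n)).

Definition deg (n : nat) (w : nat -> nat -> R) (i : nat) : R :=
  sumV n (fun j => w i j).

(* omega_ij^q, with the convention omega^q := 0 when omega = 0 *)
Definition wpow (w : nat -> nat -> R) (q : R) (i j : nat) : R :=
  if Rlt_dec 0 (w i j) then Rpower (w i j) q else 0.

Definition TVa (n : nat) (w : nat -> nat -> R) (q : R) (u : nat -> R) : R :=
  / 2 * sumV n (fun i => sumV n (fun j => wpow w q i j * Rabs (u i - u j))).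

Definition innerV (n : nat) (w : nat -> nat -> R) (r : R) (u v : nat -> R) : R :=
  sumV n (fun i => u i * v i * Rpower (deg n w i) r).

(* indicator of a subset S (subsets of V are boolean predicates on nat) *)
Definition chi (S : nat -> bool) (i : nat) : R := if S i then 1 else 0.

(* walks: p lists the vertices visited after the start x; each step is an edge *)
Fixpoint is_walk (n : nat) (w : nat -> nat -> R) (x : nat) (p : list nat) : Prop :=
  match p with
  | nil => True
  | y :: p' => (y < n)%nat /\ 0 < w x y /\ is_walk n w y p'
  end.

Fixpoint walk_len (w : nat -> nat -> R) (q : R) (x : nat) (p : list nat) : R :=
  match p with
  | nil => 0
  | y :: p' => Rpower (w x y) (q - 1) + walk_len w q y p'
  end.

Definition connected (n : nat) (w : nat -> nat -> R) : Prop :=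
  forall i j, (i < n)%nat -> (j < n)%nat ->
    exists p, is_walk n w i p /\ last p i = j.

Definition IsGraphDist (n : nat) (w : nat -> nat -> R) (q : R) (i j : nat) (d : R) : Prop :=
  (exists p, is_walk n w i p /\ last p i = j /\ walk_len w q i p = d) /\
  (forall p, is_walk n w i p -> last p i = j -> d <= walk_len w q i p).

(* graph distance d^G_ij (the minimum, which exists on a connected finite graph) *)
Definition dG (n : nat) (w : nat -> nat -> R) (q : R) (i j : nat) : R :=
  epsilon (inhabits 0) (fun d => IsGraphDist n w q i j d).

Definition IsSetDist (n : nat) (w : nat -> nat -> R) (q : R) (T : nat -> Prop) (i : nat) (d : R) : Prop :=
  (exists j, (j < n)%nat /\ T j /\ d = dG n w q i j) /\
  (forall j, (j < n)%nat -> T j -> d <= dG n w q i j).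

Definition dT (n : nat) (w : nat -> nat -> R) (q : R) (T : nat -> Prop) (i : nat) : R :=
  epsilon (inhabits 0) (fun d => IsSetDist n w q T i d).

Definition Sigma (n : nat) (w : nat -> nat -> R) (S : nat -> bool) (i : nat) : Prop :=
  (i < n)%nat /\ exists j, (j < n)%nat /\ 0 < w i j /\ S i <> S j.

Definition sd (n : nat) (w : nat -> nat -> R) (q : R) (S : nat -> bool) (i : nat) : R :=
  ((1 - chi S i) - chi S i) * dT n w q (Sigma n w S) i.

Definition Fobj (n : nat) (w : nat -> nat -> R) (q r dt : R) (S : nat -> bool) (u : nat -> R) : R :=
  TVa n w q u + / dt * innerV n w r u (sd n w q S).

Definition inBox (n : nat) (m : R) (u : nat -> R) : Prop :=
  forall i, (i < n)%nat -> - m <= u i <= m.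

Definition IsMinimizer (n : nat) (w : nat -> nat -> R) (q r dt m : R) (S : nat -> bool) (u : nat -> R) : Prop :=
  inBox n m u /\ forall v, inBox n m v -> Fobj n w q r dt S u <= Fobj n w q r dt S v.

Definition superlevel (u : nat -> R) (s : R) (i : nat) : bool :=
  if Rlt_dec s (u i) then true else false.

Definition calF (n : nat) (w : nat -> nat -> R) (q r dt : R) (Shat S : nat -> bool) : R :=
  TVa n w q (chi Shat) - TVa n w q (chi S)
  + / dt * innerV n w r (fun i => chi Shat i - chi S i)
                        (fun i => (chi Shat i - chi S i) * dT n w q (Sigma n w S) i).

(* Main.v *)
Require Import Defs.
From Stdlib Require Import Reals List Lra Lia.
From Coquelicot Require Import Coquelicot.
Require Import Defs.
Open Scope R_scope.


Definition Lin (a b : R) (f : R -> R) (L : R) : Prop := ex_RInt f a b /\ RInt f a b = L.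

Lemma Lin_plus a b f g L1 L2 : Lin a b f L1 -> Lin a b g L2 -> Lin a b (fun t => f t + g t) (L1 + L2).
Proof.
  intros [e1 r1] [e2 r2]. split.
  - exact (ex_RInt_plus f g a b e1 e2).
  - etransitivity; [exact (RInt_plus f g a b e1 e2)|]. rewrite r1, r2. reflexivity.
Qed.

Lemma Lin_scal a b f L k : Lin a b f L -> Lin a b (fun t => k * f t) (k * L).
Proof.
  intros [e1 r1]. split.
  - exact (ex_RInt_scal f a b k e1).
  - etransitivity; [exact (RInt_scal f a b k e1)|]. rewrite r1. reflexivity.
Qed.

Lemma Lin_const a b c : Lin a b (fun _ => c) ((b - a) * c).
Proof. split. apply ex_RInt_const. rewrite RInt_const. reflexivity. Qed.

Lemma Lin_ext a b f g L L' : Lin a b f L -> (forall t, f t = g t) -> L = L' -> Lin a b g L'.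
Proof.
  intros [e r] H <-. split.
  - apply (ex_RInt_ext f g); auto.
  - rewrite <- r. symmetry. apply RInt_ext; auto.
Qed.

Definition ind (a t : R) : R := if Rlt_dec t a then 1 else 0.

Lemma Lin_ind m a : -m <= a <= m -> Lin (-m) m (ind a) (a + m).
Proof.
  intros Ha.
  assert (E1 : ex_RInt (ind a) (-m) a).
  { apply (ex_RInt_ext (fun _ => 1)). 2: apply ex_RInt_const.
    intros x Hx. rewrite Rmin_left in Hx by lra. rewrite Rmax_right in Hx by lra.
    unfold ind. destruct (Rlt_dec x a); lra. }
  assert (E2 : ex_RInt (ind a) a m).
  { apply (ex_RInt_ext (fun _ => 0)). 2: apply ex_RInt_const.
    intros x Hx. rewrite Rmin_left in Hx by lra. rewrite Rmax_right in Hx by lra.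
    unfold ind. destruct (Rlt_dec x a); lra. }
  split. exact (ex_RInt_Chasles _ _ _ _ E1 E2).
  rewrite <- (RInt_Chasles _ _ _ _ E1 E2).
  rewrite (RInt_ext (ind a) (fun _ => 1) (-m) a).
  2:{ intros x Hx. rewrite Rmin_left in Hx by lra. rewrite Rmax_right in Hx by lra.
    unfold ind. destruct (Rlt_dec x a); lra. }
  rewrite (RInt_ext (ind a) (fun _ => 0) a m).
  2:{ intros x Hx. rewrite Rmin_left in Hx by lra. rewrite Rmax_right in Hx by lra.
    unfold ind. destruct (Rlt_dec x a); lra. }
  rewrite !RInt_const. change (scal (a - - m) 1 + scal (m - a) 0 = a + m).
  unfold scal; simpl. unfold mult; simpl. ring.
Qed.

Lemma Lin_list a b (f : nat -> R -> R) (L : nat -> R) (l : list nat) :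
  (forall i, In i l -> Lin a b (f i) (L i)) ->
  Lin a b (fun t => fold_right Rplus 0 (map (fun i => f i t) l)) (fold_right Rplus 0 (map L l)).
Proof.
  induction l as [|x l IH]; intros H; simpl.
  - apply (Lin_ext a b (fun _ => 0) (fun _ => 0) ((b-a)*0)). apply Lin_const. auto. ring.
  - apply Lin_plus. apply H; simpl; auto. apply IH. intros; apply H; simpl; auto.
Qed.

Lemma fold_ext (f g : nat -> R) (l : list nat) :
  (forall i, In i l -> f i = g i) ->
  fold_right Rplus 0 (map f l) = fold_right Rplus 0 (map g l).
Proof.
  induction l as [|x l IH]; intros H; simpl; auto.
  rewrite H by (simpl; auto). rewrite IH; auto. intros; apply H; simpl; auto.
Qed.

Lemma sumV_ext n f g : (forall i, (i < n)%nat -> f i = g i) -> sumV n f = sumV n g.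
Proof.
  intros H. unfold sumV. apply fold_ext. intros i Hi. apply in_seq in Hi. apply H. lia.
Qed.

Lemma sumV_plus n f g : sumV n (fun i => f i + g i) = sumV n f + sumV n g.
Proof.
  unfold sumV. induction (seq 0 n) as [|x l IH]; simpl. ring. rewrite IH. ring.
Qed.

Lemma sumV_scal n k f : sumV n (fun i => k * f i) = k * sumV n f.
Proof.
  unfold sumV. induction (seq 0 n) as [|x l IH]; simpl. ring. rewrite IH. ring.
Qed.

Lemma Lin_sumV a b n (f : nat -> R -> R) (L : nat -> R) :
  (forall i, (i < n)%nat -> Lin a b (f i) (L i)) ->
  Lin a b (fun t => sumV n (fun i => f i t)) (sumV n L).
Proof.
  intros H. unfold sumV. apply Lin_list. intros i Hi. apply in_seq in Hi. apply H. lia.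
Qed.

Definition Gf n w q r dt S (E : nat -> bool) : R :=
  TVa n w q (chi E) + / dt * innerV n w r (chi E) (sd n w q S).

Lemma Gf_ext n w q r dt S A B : (forall i, (i < n)%nat -> A i = B i) ->
  Gf n w q r dt S A = Gf n w q r dt S B.
Proof.
  intros H. unfold Gf, TVa, innerV.
  assert (Hc : forall i, (i < n)%nat -> chi A i = chi B i) by (intros i Hi; unfold chi; rewrite H; auto).
  f_equal. f_equal. apply sumV_ext; intros i Hi. apply sumV_ext; intros j Hj.
  rewrite !Hc; auto.
  f_equal. apply sumV_ext; intros i Hi. rewrite Hc; auto.
Qed.

Definition upd (A : nat -> bool) k b := fun i => if Nat.eqb i k then b else A i.

Lemma finite_min : forall k (Phi : (nat -> bool) -> R),
  (forall A B, (forall i, (i < k)%nat -> A i = B i) -> Phi A = Phi B) ->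
  exists A, forall B, Phi A <= Phi B.
Proof.
  induction k as [|k IH]; intros Phi HP.
  - exists (fun _ => true). intros B. right. apply HP. intros; lia.
  - assert (Hb : forall b, exists A, forall B, Phi (upd A k b) <= Phi (upd B k b)).
    { intros b. apply (IH (fun A => Phi (upd A k b))).
      intros A B H. apply HP. intros i Hi. unfold upd.
      destruct (Nat.eqb_spec i k); auto. apply H. lia. }
    destruct (Hb true) as [A1 H1]. destruct (Hb false) as [A0 H0].
    assert (HB : forall B, Phi B = Phi (upd B k (B k))).
    { intros B. apply HP. intros i Hi. unfold upd. destruct (Nat.eqb_spec i k); subst; auto. }
    destruct (Rle_dec (Phi (upd A1 k true)) (Phi (upd A0 k false))) as [Hle|Hle].
    + exists (upd A1 k true). intros B. rewrite (HB B). destruct (B k).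
      * apply H1.
      * eapply Rle_trans; [exact Hle|]. apply H0.
    + exists (upd A0 k false). intros B. rewrite (HB B). destruct (B k).
      * eapply Rle_trans; [|apply H1]. lra.
      * apply H0.
Qed.

Lemma calF_G n w q r dt S Shat :
  calF n w q r dt Shat S = Gf n w q r dt S Shat +
   (- TVa n w q (chi S) + / dt * sumV n (fun i => chi S i * chi S i * dT n w q (Sigma n w S) i * Rpower (deg n w i) r)).
Proof.
  unfold calF, Gf, innerV.
  assert (H : sumV n (fun i => (chi Shat i - chi S i) * ((chi Shat i - chi S i) * dT n w q (Sigma n w S) i) * Rpower (deg n w i) r)
    = sumV n (fun i => chi Shat i * sd n w q S i * Rpower (deg n w i) r) +
      sumV n (fun i => chi S i * chi S i * dT n w q (Sigma n w S) i * Rpower (deg n w i) r)).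
  { rewrite <- sumV_plus. apply sumV_ext. intros i _. unfold sd, chi.
    destruct (Shat i), (S i); ring. }
  rewrite H. ring.
Qed.

Lemma chi_sl v t i : chi (superlevel v t) i = ind (v i) t.
Proof. unfold chi, superlevel, ind. destruct (Rlt_dec t (v i)); reflexivity. Qed.

Lemma abs_ind a b t : Rabs (ind a t - ind b t) = ind a t + ind b t + (-2) * ind (Rmin a b) t.
Proof.
  unfold ind, Rmin. destruct (Rle_dec a b);
  destruct (Rlt_dec t a), (Rlt_dec t b); try destruct (Rlt_dec t a); try destruct (Rlt_dec t b);
  try (rewrite Rabs_R0 || rewrite Rabs_R1); try lra;
  unfold Rabs; destruct (Rcase_abs _); lra.
Qed.

Lemma Lin_G n w q r dt S m v : inBox n m v ->
  Lin (-m) m (fun t => Gf n w q r dt S (superlevel v t))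
    (Fobj n w q r dt S v + / dt * (m * sumV n (fun i => sd n w q S i * Rpower (deg n w i) r))).
Proof.
  intros Hv. unfold Gf, TVa, innerV, Fobj.
  apply (Lin_ext (-m) m (fun t => / 2 * sumV n (fun i => sumV n (fun j => wpow w q i j *
      (ind (v i) t + ind (v j) t + (-2) * ind (Rmin (v i) (v j)) t))) +
      / dt * sumV n (fun i => (sd n w q S i * Rpower (deg n w i) r) * ind (v i) t)) _
      (/ 2 * sumV n (fun i => sumV n (fun j => wpow w q i j *
      ((v i + m) + (v j + m) + (-2) * (Rmin (v i) (v j) + m)))) +
      / dt * sumV n (fun i => (sd n w q S i * Rpower (deg n w i) r) * (v i + m)))).
  - apply Lin_plus; apply Lin_scal; apply Lin_sumV; intros i Hi.
    + apply Lin_sumV. intros j Hj. apply Lin_scal.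
      apply Lin_plus; [apply Lin_plus|apply Lin_scal]; apply Lin_ind.
      * apply Hv; auto.
      * apply Hv; auto.
      * pose proof (Hv i Hi); pose proof (Hv j Hj). unfold Rmin; destruct (Rle_dec (v i) (v j)); lra.
    + apply Lin_scal. apply Lin_ind. apply Hv; auto.
  - intros t. simpl. f_equal.
    + f_equal. apply sumV_ext; intros i _. apply sumV_ext; intros j _.
      rewrite !chi_sl, abs_ind. reflexivity.
    + f_equal. apply sumV_ext; intros i _. rewrite chi_sl. ring.
  - unfold TVa, innerV. rewrite Rplus_assoc. f_equal.
    + f_equal. apply sumV_ext; intros i Hi. apply sumV_ext; intros j Hj. f_equal.
      pose proof (Hv i Hi); pose proof (Hv j Hj).
      unfold Rmin, Rabs; destruct (Rle_dec (v i) (v j)); destruct (Rcase_abs _); lra.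
    + rewrite <- Rmult_plus_distr_l. f_equal. rewrite <- sumV_scal, <- sumV_plus.
      apply sumV_ext; intros i _. ring.
Qed.

Lemma eps_exists (u : nat -> R) s m : s < m -> forall k, exists e, 0 < e /\ e <= m - s /\
  forall i, (i < k)%nat -> s < u i -> s + e <= u i.
Proof.
  intros Hs k. induction k as [|k [e [He1 [He2 He3]]]].
  - exists (m - s). split; [lra|split; [lra|]]. intros; lia.
  - destruct (Rlt_dec s (u k)) as [Hk|Hk].
    + exists (Rmin e (u k - s)). split; [apply Rmin_glb_lt; lra|split].
      * eapply Rle_trans; [apply Rmin_l|lra].
      * intros i Hi Hsi. destruct (Nat.eq_dec i k) as [->|Hne].
        -- pose proof (Rmin_r e (u k - s)); lra.
        -- pose proof (Rmin_l e (u k - s)); pose proof (He3 i ltac:(lia) Hsi); lra.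
    + exists e. split; [lra|split; [lra|]]. intros i Hi Hsi.
      destruct (Nat.eq_dec i k) as [->|Hne]; [lra|]. apply He3; auto; lia.
Qed.

Theorem mainTheorem9
  (n : nat) (w : nat -> nat -> R) (r q : R)
  (Hr : 0 <= r <= 1) (Hq : / 2 <= q <= 1)
  (Hsym : forall i j, (i < n)%nat -> (j < n)%nat -> w i j = w j i)
  (Hnonneg : forall i j, (i < n)%nat -> (j < n)%nat -> 0 <= w i j)
  (Hdiag : forall i, (i < n)%nat -> w i i = 0)
  (Hdeg : forall i, (i < n)%nat -> 0 < deg n w i)
  (Hconn : connected n w)
  (S : nat -> bool)
  (HSne : exists i, (i < n)%nat /\ S i = true)
  (HSnV : exists i, (i < n)%nat /\ S i = false)
  (dt m : R) (Hdt : 0 < dt) (Hm : 0 < m) :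
  (exists u, IsMinimizer n w q r dt m S u) /\
  (forall u, IsMinimizer n w q r dt m S u ->
     forall s, - m < s < m ->
       forall Shat : nat -> bool,
         calF n w q r dt (superlevel u s) S <= calF n w q r dt Shat S).
Proof.
  set (Phi := Gf n w q r dt S).
  set (K := / dt * (m * sumV n (fun i => sd n w q S i * Rpower (deg n w i) r))).
  destruct (finite_min n Phi) as [Es HEs].
  { intros A B H. apply Gf_ext. auto. }
  assert (Hlow : forall v, inBox n m v -> (m - - m) * Phi Es <= Fobj n w q r dt S v + K).
  { intros v Hv. destruct (Lin_G n w q r dt S m v Hv) as [e1 r1]. fold K in r1.
    destruct (Lin_const (-m) m (Phi Es)) as [e0 r0].
    rewrite <- r0, <- r1. apply RInt_le; auto. lra. }
  set (us := fun i => if Es i then m else - m).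
  assert (Hus : inBox n m us).
  { intros i _. unfold us. destruct (Es i); lra. }
  assert (Hval : Fobj n w q r dt S us + K = (m - - m) * Phi Es).
  { destruct (Lin_G n w q r dt S m us Hus) as [e1 r1]. fold K in r1.
    rewrite <- r1. rewrite <- (proj2 (Lin_const (-m) m (Phi Es))).
    apply RInt_ext. intros t Ht. rewrite Rmin_left in Ht by lra. rewrite Rmax_right in Ht by lra.
    apply Gf_ext. intros i _. unfold superlevel, us.
    destruct (Es i); destruct (Rlt_dec t _); auto; lra. }
  assert (Hmin : IsMinimizer n w q r dt m S us).
  { split; auto. intros v Hv. pose proof (Hlow v Hv). lra. }
  split. { exists us; exact Hmin. }
  intros u [Hu Humin] s Hs Shat.
  rewrite !calF_G. apply Rplus_le_compat_r.
  apply Rle_trans with (Phi Es); [|apply HEs].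
  fold Phi. destruct (Rle_dec (Phi (superlevel u s)) (Phi Es)) as [Hle|Hlt]; auto.
  exfalso. apply Rnot_le_lt in Hlt.
  set (d := Phi (superlevel u s) - Phi Es).
  destruct (eps_exists u s m (proj2 Hs) n) as [e [He1 [He2 He3]]].
  assert (HL : Lin (-m) m (fun t => Phi Es + d * (ind (s + e) t + (-1) * ind s t))
      ((m - - m) * Phi Es + d * ((s + e + m) + (-1) * (s + m)))).
  { apply Lin_plus.
    - apply Lin_const.
    - apply Lin_scal. apply Lin_plus. apply Lin_ind; lra. apply Lin_scal. apply Lin_ind; lra. }
  destruct HL as [eL rL].
  destruct (Lin_G n w q r dt S m u Hu) as [e1 r1]. fold K in r1.
  assert (Hle : RInt (fun t => Phi Es + d * (ind (s + e) t + (-1) * ind s t)) (-m) m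
     <= RInt (fun t => Phi (superlevel u t)) (-m) m).
  { apply RInt_le; auto. lra. intros t Ht. unfold ind.
    destruct (Rlt_dec t (s + e)), (Rlt_dec t s).
    - assert (Phi Es <= Phi (superlevel u t)) by apply HEs. lra.
    - replace (Phi (superlevel u t)) with (Phi (superlevel u s)).
      + unfold d. lra.
      + apply Gf_ext. intros i Hi. unfold superlevel.
        destruct (Rlt_dec s (u i)), (Rlt_dec t (u i)); auto.
        * pose proof (He3 i Hi r2). lra.
        * lra.
    - lra.
    - assert (Phi Es <= Phi (superlevel u t)) by apply HEs. lra. }
  rewrite rL in Hle. unfold Phi in Hle. rewrite r1 in Hle.
  pose proof (Humin us Hus). fold Phi in Hle.
  assert (0 < d * e) by (apply Rmult_lt_0_compat; unfold d; lra).
  lra.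
Qed.
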